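(* Let $\tilde C(q)=\sum_{g\ge3}\tilde c_gq^g$, where $\tilde c_g$ is the number of NSG-compositions $x_1+\cdots+x_{m-1}$ of genus $g$ with maximum $3$ and last part $x_{m-1}=3$. Then the generating series $\sum_g a_gq^g$, where $a_g$ is the number of NSG-compositions of genus $g$ with maximum exactly $3$, equals $\dfrac{\tilde C(q)}{1-q-q^2}$. Consequently the generating series of all NSG-compositions with maximum at most $3$ (including the empty one) is $\dfrac{1+\tilde C(q)}{1-q-q^2}$.
   Context: An NSG-composition is a composition $x_1+\cdots+x_{m-1}$ of positive integers ($m\ge1$, empty composition allowed) satisfying $x_{s+t}\le x_s+x_t$ and $x_{m-s-t}\le x_{m-s}+x_{m-t}+1$ for all $s,t\ge1$, $s+t<m$ (equivalently, the Kunz vector of a numerical semigroup of multiplicity $m$); its genus is $\sum x_j$ and its maximum is $\max_jx_j$. Equivalently, $\tilde c_g$ is the number of numerical semigroups of genus $g$ with Frobenius number $3m-1$, $m$ the multiplicity. *)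

(* Defs.v *)
From mathcomp Require Import all_boot all_order all_algebra.
Set Implicit Arguments. Unset Strict Implicit. Unset Printing Implicit Defensive.
Import GRing.Theory Num.Theory.

(* A composition x_1 + ... + x_{m-1} is represented by the sequence
   s = [:: x_1; ...; x_{m-1}], so m = size s + 1.  1-based access: *)
Definition xpart (s : seq nat) (j : nat) : nat := nth 0 s j.-1.

Definition is_NSG (s : seq nat) : bool :=
  let m := (size s).+1 in
  all (fun x => 0 < x) s &&
  all (fun a => all (fun b =>
        (a + b < m) ==>
        ((xpart s (a + b) <= xpart s a + xpart s b) &&
         (xpart s (m - a - b) <= xpart s (m - a) + xpart s (m - b) + 1)))
      (iota 1 m)) (iota 1 m).

Definition genus (s : seq nat) : nat := sumn s.
Definition maxpart (s : seq nat) : nat := foldr maxn 0 s.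

(* Number of NSG-compositions of genus g satisfying the extra property P.
   A composition of g with positive parts has at most g parts, each <= g,
   so we enumerate all k-tuples with entries in 'I_g.+1, k <= g. *)
Definition nsg_count (P : seq nat -> bool) (g : nat) : nat :=
  \sum_(k < g.+1)
    #|[pred t : k.-tuple 'I_g.+1 |
        let s := map val t in
        [&& genus s == g, is_NSG s & P s]]|.

Definition ctilde (g : nat) : nat :=
  if 3 <= g then nsg_count (fun s => (maxpart s == 3) && (last 0 s == 3)) g
  else 0.

Definition a_max3 (g : nat) : nat := nsg_count (fun s => maxpart s == 3) g.

Definition b_le3 (g : nat) : nat := nsg_count (fun s => maxpart s <= 3) g.

(* Formal power series over int, represented by coefficient functions;
   Cauchy product coefficient. *)
Definition ps_mul (f h : nat -> int) (n : nat) : int :=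
  (\sum_(i < n.+1) f i * h (n - i)%N)%R.

Definition one_m_q_m_q2 (n : nat) : int :=
  (if n == 0%N then 1 else if (n <= 2)%N then -1 else 0)%R.

(* Main.v *)
Require Import Defs.
From mathcomp Require Import all_boot all_order all_algebra zify ring.
Set Implicit Arguments. Unset Strict Implicit. Unset Printing Implicit Defensive.


Fixpoint allle (n k : nat) : seq (seq nat) :=
  if k is k'.+1 then [::] :: [seq x :: s | x <- iota 0 n, s <- allle n k']
  else [:: [::]].

Lemma allle_uniq n k : uniq (allle n k).
Proof.
elim: k => [//|k IH] /=; apply/andP; split.
  by apply/negP => /allpairsP [[x s] [_ _]].
apply: allpairs_uniq => //; first exact: iota_uniq.
by move=> [x s] [y t] _ _ /= [-> ->].
Qed.

Lemma mem_allle n k s : (s \in allle n k) = (size s <= k) && all (fun x => x < n) s.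
Proof.
elim: k s => [|k IH] s.
  by case: s => [|x s] //=; rewrite inE.
case: s => [|x s] //=.
rewrite in_cons /=; apply/allpairsP/idP.
  by move=> [[y t] [/= Hy Ht [-> ->]]]; move: Hy Ht; rewrite mem_iota IH => /andP[_ ->].
move=> /andP[Hs /andP[Hx Ha]]; exists (x, s); split => //=.
  by rewrite mem_iota.
by rewrite IH -ltnS Hs.
Qed.

Lemma count_allpairs (Q : pred (seq nat)) (xs : seq nat) l :
  count Q [seq x :: s | x <- xs, s <- l] = \sum_(x <- xs) count (fun s => Q (x :: s)) l.
Proof.
elim: xs => [|x xs IH]; first by rewrite big_nil.
by rewrite allpairs_cons count_cat count_map IH big_cons.
Qed.

Lemma card_sumE (T : finType) (p : pred T) : #|p| = \sum_(t : T) (p t : nat).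
Proof. by rewrite -sum1_card big_mkcond. Qed.

Lemma card_tuple_step n j (Q : seq nat -> bool) :
  #|[pred t : j.+1.-tuple 'I_n | Q (map val t)]| =
  \sum_(x < n) #|[pred t : j.-tuple 'I_n | Q (val x :: map val t)]|.
Proof.
rewrite card_sumE.
rewrite (eq_bigr (fun x : 'I_n => \sum_(t : j.-tuple 'I_n) (Q (val x :: map val t) : nat))); last first.
  by move=> x _; rewrite card_sumE.
rewrite pair_big /=.
rewrite (reindex (fun p : 'I_n * j.-tuple 'I_n => [tuple of p.1 :: p.2])) /=.
  by [].
exists (fun t => (thead t, [tuple of behead t])).
  by move=> [x t] _ /=; rewrite theadE; congr pair; apply: val_inj.
by move=> t _ /=; rewrite [in RHS](tuple_eta t).
Qed.

Lemma card_tuple0 n (Q : seq nat -> bool) :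
  #|[pred t : 0.-tuple 'I_n | Q (map val t)]| = Q [::].
Proof.
rewrite card_sumE (eq_bigr (fun _ => (Q [::] : nat))).
  by rewrite sum_nat_const card_tuple expn0 mul1n.
move=> t _ /=; have -> : tval t = [::] by apply: size0nil; rewrite size_tuple.
by [].
Qed.

Lemma card_sum_allle n k (Q : seq nat -> bool) :
  \sum_(j < k.+1) #|[pred t : j.-tuple 'I_n | Q (map val t)]| = count Q (allle n k).
Proof.
elim: k Q => [|k IH] Q.
  by rewrite big_ord1 card_tuple0 /= addn0.
rewrite big_ord_recl card_tuple0 /= count_allpairs.
congr addn.
under eq_bigr do rewrite card_tuple_step.
rewrite exchange_big /=.
under eq_bigr do rewrite (IH (fun s => Q (_ :: s))).
by rewrite -(big_mkord xpredT (fun x => count (fun s => Q (x :: s)) (allle n k))) /index_iota subn0.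
Qed.


Lemma in_maxpart x s : x \in s -> x <= maxpart s.
Proof.
elim: s => [//|y s IH]; rewrite in_cons /= => /orP [/eqP ->|/IH H]; lia.
Qed.

Lemma maxpart_le s k : (maxpart s <= k) = all (fun x => x <= k) s.
Proof. by elim: s => [//|y s IH] /=; rewrite geq_max IH. Qed.

Lemma maxpart_rcons s c : maxpart (rcons s c) = maxn (maxpart s) c.
Proof. elim: s => [|y s IH] /=; [lia | rewrite IH; lia]. Qed.

Lemma xpart_le s j : xpart s j <= maxpart s.
Proof.
rewrite /xpart; case: (ltnP j.-1 (size s)) => H.
  by apply: in_maxpart; apply: mem_nth.
by rewrite nth_default.
Qed.

Lemma xpart_pos s j : all (fun x => 0 < x) s -> 0 < j <= size s -> 0 < xpart s j.
Proof.
move=> /allP Hp Hj; apply: Hp; apply: mem_nth; case: j Hj => //= j; lia.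
Qed.

Lemma xpart_rcons s c j : 0 < j <= size s -> xpart (rcons s c) j = xpart s j.
Proof. move=> Hj; rewrite /xpart nth_rcons; have -> : j.-1 < size s by case: j Hj => //= j; lia. by []. Qed.

Lemma xpart_rcons_last s c : xpart (rcons s c) (size s).+1 = c.
Proof. by rewrite /xpart nth_rcons /= ltnn eqxx. Qed.

Definition cond1 s := forall a b, 0 < a -> 0 < b -> a + b <= size s ->
  xpart s (a + b) <= xpart s a + xpart s b.

Lemma NSG3 s : maxpart s <= 3 -> is_NSG s <-> all (fun x => 0 < x) s /\ cond1 s.
Proof.
move=> Hm; rewrite /is_NSG; cbv zeta; split.
  case/andP => Hp /allP H; split => // a b a0 b0 ab.
  have H2 := H a; rewrite mem_iota in H2; have /allP H3 := H2 ltac:(lia).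
  have H4 := H3 b; rewrite mem_iota in H4.
  by have /implyP /(_ ltac:(lia)) /andP [] := H4 ltac:(lia).
move=> [Hp H]; rewrite Hp andTb; apply/allP => a; rewrite mem_iota => /andP [a1 _].
apply/allP => b; rewrite mem_iota => /andP [b1 _]; apply/implyP => ab.
rewrite H /=; [|lia..].
have h1 := xpart_le s ((size s).+1 - a - b).
have h2 := xpart_pos (j := (size s).+1 - a) Hp.
have h3 := xpart_pos (j := (size s).+1 - b) Hp.
have h2' := h2 ltac:(lia). have h3' := h3 ltac:(lia).
lia.
Qed.

Lemma NSG_rcons s c : maxpart s <= 3 -> 0 < c <= 2 ->
  is_NSG (rcons s c) = is_NSG s.
Proof.
move=> Hm Hc.
have Hm' : maxpart (rcons s c) <= 3 by rewrite maxpart_rcons; lia.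
apply/idP/idP.
  move/(NSG3 Hm') => [Hp H]; apply/(NSG3 Hm); move: Hp; rewrite all_rcons => /andP [_ Hp].
  split => // a b a0 b0 ab.
  have := H a b a0 b0; rewrite size_rcons !xpart_rcons; [|lia..].
  by apply; lia.
move/(NSG3 Hm) => [Hp H]; apply/(NSG3 Hm'); rewrite all_rcons Hp andbT.
split; first lia.
move=> a b a0 b0; rewrite size_rcons => ab.
rewrite (xpart_rcons _ _ (j := a)); last lia.
rewrite (xpart_rcons _ _ (j := b)); last lia.
case: (ltnP (a + b) (size s).+1) => ab'.
  by rewrite xpart_rcons; [apply: H|]; lia.
have -> : a + b = (size s).+1 by lia.
rewrite xpart_rcons_last.
have := xpart_pos (j := a) Hp; have := xpart_pos (j := b) Hp; lia.
Qed.


Definition V g := allle g.+1 g.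
Definition F g (P : seq nat -> bool) s := [&& genus s == g, is_NSG s & P s].

Lemma nsg_countE P g : nsg_count P g = count (F g P) (V g).
Proof. rewrite /nsg_count; exact: card_sum_allle. Qed.

Lemma size_le_sumn s : all (fun x => 0 < x) s -> size s <= sumn s.
Proof. elim: s => [//|x s IH] /= /andP [H1 H2]; have := IH H2; lia. Qed.

Lemma in_le_sumn x s : x \in s -> x <= sumn s.
Proof. elim: s => [//|y s IH]; rewrite in_cons /= => /orP [/eqP ->|/IH]; lia. Qed.

Lemma inV s : all (fun x => 0 < x) s -> s \in V (sumn s).
Proof.
move=> Hp; rewrite /V mem_allle size_le_sumn //=.
apply/allP => x Hx; have := in_le_sumn Hx; lia.
Qed.

Lemma count_uniq_eq (Q : pred (seq nat)) l1 l2 : uniq l1 -> uniq l2 ->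
  (forall s, Q s -> s \in l1) -> (forall s, Q s -> s \in l2) ->
  count Q l1 = count Q l2.
Proof.
move=> U1 U2 H1 H2; rewrite -!size_filter; apply: perm_size.
apply: uniq_perm; rewrite ?filter_uniq // => s; rewrite !mem_filter.
by case Qs: (Q s) => //=; rewrite H1 ?H2.
Qed.

Lemma last_in s : s != [::] -> last 0 s \in s.
Proof. by case: s => [//|x s] _ /=; apply: mem_last. Qed.

Lemma NSG_pos s : is_NSG s -> all (fun x => 0 < x) s.
Proof. by case/andP. Qed.

Lemma count4 (p p1 p2 p3 p4 : pred (seq nat)) l :
  (forall x, p x = p1 x + p2 x + p3 x + p4 x :> nat) ->
  count p l = count p1 l + count p2 l + count p3 l + count p4 l.
Proof. move=> H; elim: l => [//|x l IH] /=; rewrite H IH; lia. Qed.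

Section Rec.
Variable P : seq nat -> bool.
Hypothesis HP : forall s d, 0 < d <= 2 -> P (rcons s d) = P s.
Hypothesis HP3 : forall s, P s -> maxpart s <= 3.

Lemma count_last c g : 0 < c <= 2 ->
  count (fun s => F g P s && (last 0 s == c)) (V g)
  = if c <= g then count (F (g - c) P) (V (g - c)) else 0.
Proof.
move=> Hc; case: leqP => Hcg.
  rewrite (@count_uniq_eq _ _ (map (rcons^~ c) (V (g - c)))).
  - rewrite count_map; apply: eq_count => s /=.
    rewrite /F /genus sumn_rcons last_rcons eqxx andbT HP //.
    case Ps: (P s); last by rewrite !andbF.
    rewrite !andbT NSG_rcons //; last exact: HP3.
    congr andb; apply/eqP/eqP; lia.
  - exact: allle_uniq.
  - by rewrite map_inj_uniq ?allle_uniq //; apply: rcons_injl.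
  - move=> s /andP [/and3P [/eqP Hg Hn _] _]; rewrite -Hg; apply: inV; exact: NSG_pos.
  - move=> s /andP [/and3P [/eqP Hg Hn _]].
    case/lastP: s Hg Hn => [|s d]; first by move=> _ _ /eqP /= H; lia.
    rewrite last_rcons => Hg Hn /eqP Hd; subst d; apply: map_f.
    move: Hg; rewrite /genus sumn_rcons => Hg.
    have -> : g - c = sumn s by lia.
    apply: inV; move: (NSG_pos Hn); rewrite all_rcons; by case/andP.
rewrite (@count_uniq_eq _ _ [::]) //.
- exact: allle_uniq.
- move=> s /andP [/and3P [/eqP Hg Hn _] _]; rewrite -Hg; apply: inV; exact: NSG_pos.
- move=> s /andP [/and3P [/eqP Hg Hn _] /eqP Hl].
  have Hne : s != [::] by case: s Hl Hg Hn => //= Hl; lia.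
  have := in_le_sumn (last_in Hne); rewrite /genus in Hg; lia.
Qed.

Lemma count_nil g : count (fun s => F g P s && (s == [::])) (V g) = P [::] && (g == 0).
Proof.
rewrite (@count_uniq_eq _ _ [:: [::]]) //=.
- by rewrite /F /= andbT addn0 eq_sym andbC.
- exact: allle_uniq.
- by move=> s /andP [_ /eqP ->]; rewrite /V mem_allle.
- by move=> s /andP [_ /eqP ->]; rewrite inE.
Qed.

Lemma count_split g : count (F g P) (V g) =
  (P [::] && (g == 0)) + count (fun s => F g P s && (last 0 s == 3)) (V g)
  + (if 1 <= g then count (F (g - 1) P) (V (g - 1)) else 0)
  + (if 2 <= g then count (F (g - 2) P) (V (g - 2)) else 0).
Proof.
rewrite -count_nil -(@count_last 1) // -(@count_last 2) //.
apply: count4 => s.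
case Fs: (F g P s) => //=.
case: s Fs => [//|x s] Fs.
have Hin := last_in (s := x :: s) isT.
have Hpos : 0 < last 0 (x :: s).
  by move: Fs => /and3P [_ /NSG_pos /allP H _]; apply: H.
have Hle : last 0 (x :: s) <= 3.
  move: Fs => /and3P [_ _ /HP3]; have := in_maxpart Hin; lia.
move: Hpos Hle; case: (last 0 (x :: s)) => [|[|[|[|]]]] //.
Qed.
End Rec.

Import GRing.Theory Num.Theory.

Lemma conv (f : nat -> int) g :
  ps_mul f one_m_q_m_q2 g =
  (f g - (if (1 <= g)%N then f (g - 1)%N else 0) - (if (2 <= g)%N then f (g - 2)%N else 0))%R.
Proof.
rewrite /ps_mul /one_m_q_m_q2.
case: g => [|[|k]].
- by rewrite big_ord1 /= mulr1 !subr0.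
- rewrite big_ord_recr big_ord1 /=. by rewrite mulr1 mulrN1 subr0 subnn addrC.
- rewrite !big_ord_recr /= big1.
    have -> : (k.+2 - 1 = k.+1)%N by lia.
    have -> : (k.+2 - 2 = k)%N by lia.
    have -> : (k.+2 - k = 2)%N by lia.
    have -> : (k.+2 - k.+1 = 1)%N by lia.
    rewrite subnn /= mulr1 !mulrN1 add0r; ring.
  move=> i _; have Hi := ltn_ord i; have -> : (k.+2 - i == 0)%N = false by lia.
  have -> : (k.+2 - i <= 2)%N = false by lia.
  by rewrite mulr0.
Qed.

Import GRing.Theory Num.Theory.

Definition P3 (s : seq nat) := maxpart s == 3.
Definition L3 (s : seq nat) := maxpart s <= 3.

Lemma HP3a s d : 0 < d <= 2 -> P3 (rcons s d) = P3 s.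
Proof. move=> Hd; rewrite /P3 maxpart_rcons; apply/eqP/eqP; lia. Qed.
Lemma HP3b s : P3 s -> maxpart s <= 3.
Proof. by rewrite /P3 => /eqP ->. Qed.
Lemma HL3a s d : 0 < d <= 2 -> L3 (rcons s d) = L3 s.
Proof. move=> Hd; rewrite /L3 maxpart_rcons; apply/idP/idP; lia. Qed.
Lemma HL3b s : L3 s -> maxpart s <= 3.
Proof. by []. Qed.

Lemma ctildeE g : ctilde g = count (fun s => F g P3 s && (last 0 s == 3)) (V g).
Proof.
rewrite /ctilde; case: leqP => Hg; last first.
  rewrite nsg_countE; apply: eq_count => s; by rewrite /F /P3 !andbA.
rewrite (@count_uniq_eq _ _ [::]) //.
- exact: allle_uniq.
- move=> s /andP [/and3P [/eqP Hg' Hn _] _]; rewrite -Hg'; apply: inV; exact: NSG_pos.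
- move=> s /andP [/and3P [/eqP Hg' Hn _] /eqP Hl].
  have Hne : s != [::] by case: s Hl Hg' Hn => //= Hl; lia.
  have := in_le_sumn (last_in Hne); rewrite /genus in Hg'; lia.
Qed.

Lemma last3 g : count (fun s => F g L3 s && (last 0 s == 3)) (V g)
  = count (fun s => F g P3 s && (last 0 s == 3)) (V g).
Proof.
apply: eq_count => s; rewrite /F /L3 /P3.
case Hl: (last 0 s == 3); last by rewrite !andbF.
have Hne : s != [::] by case: s Hl.
have := in_maxpart (last_in Hne); move/eqP: Hl => ->.
move=> H; rewrite !andbT; do 2 congr andb.
by apply/idP/eqP; lia.
Qed.

Local Open Scope ring_scope.

Theorem proposition13p1 :
  (forall g : nat,
     ps_mul (fun n => (a_max3 n)%:Z) one_m_q_m_q2 g = (ctilde g)%:Z) /\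
  (forall g : nat,
     ps_mul (fun n => (b_le3 n)%:Z) one_m_q_m_q2 g
       = (g == 0%N)%:Z + (ctilde g)%:Z).
Proof.
split => g; rewrite conv.
- have E : forall n, a_max3 n = count (F n P3) (V n) by move=> n; rewrite /a_max3 nsg_countE.
  rewrite !E (count_split HP3a HP3b) ctildeE /P3 /=.
  case: g => [|[|g]] /=; rewrite ?subn1 ?subn2 /=; lia.
- have E : forall n, b_le3 n = count (F n L3) (V n) by move=> n; rewrite /b_le3 nsg_countE.
  rewrite !E (count_split HL3a HL3b) last3 ctildeE /L3 /=.
  case: g => [|[|g]] /=; rewrite ?subn1 ?subn2 /=; lia.
Qed.
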